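(* For every prime $p$ the natural maps induce an isomorphism of rings $$\mathbb Z[1/p][q]^{\mathbb N}\;\cong\;\prod_{j=0}^\infty\mathbb Z[1/p][q]^{p^j\mathbb N_p}.$$
   Context: $\mathbb N=\{1,2,\dots\}$, $\mathbb N_p=\{n\in\mathbb N:(n,p)=1\}$, $p^j\mathbb N_p=\{p^jn:n\in\mathbb N_p\}$. For a commutative integral domain $R$ of characteristic zero and $S\subset\mathbb N$, $R[q]^S=\varprojlim_{f\in\Phi^*_S}R[q]/(f)$, where $\Phi^*_S$ is the multiplicative set generated by the cyclotomic polynomials $\Phi_n(q)$, $n\in S$, directed by divisibility; for $S'\subset S$ there is a natural map $R[q]^S\to R[q]^{S'}$. *)

(* Defs.v *)
From HB Require Import structures.
From mathcomp Require Import all_boot all_order all_algebra all_field.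
Set Implicit Arguments. Unset Strict Implicit. Unset Printing Implicit Defensive.
Import Order.TTheory GRing.Theory Num.Theory.
Local Open Scope ring_scope.

(* Z[1/p] realised as the subring of Q of rationals whose denominator is a
   power of p. *)
Definition Zinvp (p : nat) : pred rat := fun x => p.-nat `|denq x|%N.

Definition ZinvpPoly (p : nat) (P : {poly rat}) : Prop :=
  forall i : nat, Zinvp p P`_i.

Definition Phi (n : nat) : {poly rat} := map_poly (intr : int -> rat) ('Phi_n).

(* Elements of the multiplicative set Phi*_S are the products
   \prod_{n <- s} Phi_n for finite sequences s of elements of S. *)
Definition Sseq (S : pred nat) (s : seq nat) : bool := all S s.
Definition PhiProd (s : seq nat) : {poly rat} := \prod_(n <- s) Phi n.

Definition Nat_pos : pred nat := fun n => (0 < n)%N.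
Definition pjNp (p j : nat) : pred nat :=
  fun n => [&& (0 < n)%N, (p ^ j %| n)%N & coprime (n %/ p ^ j)%N p].

(* An element of Z[1/p][q]^S = lim_{f in Phi*_S} Z[1/p][q]/(f).
   Each quotient Z[1/p][q]/(f) (f monic) is represented by its canonical
   representatives, the remainders mod f; a point of the inverse limit is a
   family x(s), s an S-sequence, with x(s) in Z[1/p][q] and
   x(s) = x(t) mod f_s whenever f_s | f_t (the transition maps).  Taking
   s = t forces x(s) to be reduced mod f_s. Only values at S-sequences matter. *)
Definition inLim (p : nat) (S : pred nat) (x : seq nat -> {poly rat}) : Prop :=
  (forall s, Sseq S s -> ZinvpPoly p (x s)) /\
  (forall s t, Sseq S s -> Sseq S t -> PhiProd s %| PhiProd t ->
     x s = x t %% PhiProd s).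

(* Main.v *)
Require Import Defs.
From HB Require Import structures.
From mathcomp Require Import all_boot all_order all_algebra all_field.
From Stdlib Require Import ClassicalEpsilon.
Import GRing.Theory Num.Theory.
Local Open Scope ring_scope.
Definition ZP (p : nat) (z : {poly rat}) : Prop :=
  exists k : nat, forall i, ((p ^ k)%:R : rat) * z`_i \is a Num.int.

Lemma denq_dvd_nat (c : rat) (d : nat) :
  (d%:R * c) \is a Num.int -> (`|denq c| %| d)%N.
Proof.
move=> hi.
have e : numq c * d%:Z = numq (d%:R * c) * denq c.
  apply: (@intr_inj rat); rewrite !rmorphM /= (numqK hi) numqE.
  by rewrite pmulrn mulrC mulrA.
have := congr1 absz e; rewrite !abszM /= => e2.
have : (`|denq c| %| `|numq c| * d)%N by rewrite e2 dvdn_mull.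
by rewrite Gauss_dvdr // coprime_sym coprime_num_den.
Qed.

Lemma ZP_Zinvp p z : prime p -> ZP p z -> ZinvpPoly p z.
Proof.
move=> pp [k hk] i.
have /denq_dvd_nat hd := hk i.
rewrite /Zinvp; apply: pnat_dvd hd _.
by rewrite pnatX pnat_id.
Qed.

Lemma Zinvp_ZP p z : prime p -> ZinvpPoly p z -> ZP p z.
Proof.
move=> pp hz.
exists (\sum_(i < size z) logn p `|denq z`_i|)%N => i.
have [lti | gei] := ltnP i (size z); last first.
  by rewrite nth_default // mulr0 rpred0.
set k := (\sum_(i < size z) _)%N.
set e := logn p `|denq z`_i|.
have hek : (e <= k)%N.
  by rewrite /k (bigD1 (Ordinal lti)) //= leq_addr.
have hde : (`|denq z`_i| = p ^ e)%N.
  by rewrite -p_part part_pnat_id //; apply: hz.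
rewrite -(subnK hek) expnD natrM -mulrA.
have -> : ((p ^ e)%:R * z`_i : rat) = (numq z`_i)%:~R.
  rewrite numqE -hde mulrC; congr (_ * _).
  by rewrite -[in RHS]absz_denq.
by rewrite rpredM // ?rpred_int ?rpred_nat.
Qed.

Lemma ZP_int p (W : {poly int}) : ZP p (map_poly (intr : int -> rat) W).
Proof.
by exists 0%N => i; rewrite expn0 mul1r coef_map /= rpred_int.
Qed.

Lemma ZP0 p : ZP p 0.
Proof. by exists 0%N => i; rewrite coef0 mulr0 rpred0. Qed.

Lemma ZP1 p : ZP p 1.
Proof. by exists 0%N => i; rewrite coef1 mul1r; case: (i == 0)%N; rewrite ?rpred0 ?rpred1. Qed.

Lemma ZPD p a b : ZP p a -> ZP p b -> ZP p (a + b).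
Proof.
move=> [k1 h1] [k2 h2]; exists (k1 + k2)%N => i.
rewrite coefD mulrDr expnD natrM {1}[X in X * a`_i]mulrC -!mulrA.
by rewrite rpredD // rpredM // rpred_nat.
Qed.

Lemma ZPN p a : ZP p a -> ZP p (- a).
Proof. by move=> [k h]; exists k => i; rewrite coefN mulrN rpredN. Qed.

Lemma ZPB p a b : ZP p a -> ZP p b -> ZP p (a - b).
Proof. by move=> ha hb; apply: ZPD => //; apply: ZPN. Qed.

Lemma ZPM p a b : ZP p a -> ZP p b -> ZP p (a * b).
Proof.
move=> [k1 h1] [k2 h2]; exists (k1 + k2)%N => i.
rewrite coefM mulr_sumr; apply: rpred_sum => j _.
rewrite expnD natrM mulrACA.
by rewrite rpredM.
Qed.

Lemma ZPV p e a : prime p -> ZP p a -> ZP p (((p ^ e)%:R : rat)^-1 *: a).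
Proof.
move=> pp [k h]; exists (k + e)%N => i.
rewrite coefZ mulrA expnD natrM mulrK //.
by rewrite unitfE pnatr_eq0 expn_eq0 negb_and -lt0n prime_gt0.
Qed.

Notation pZ := (map_poly (intr : int -> rat)).

Lemma ZP_rep p z : prime p -> ZP p z ->
  exists k (W : {poly int}), z = ((p ^ k)%:R : rat)^-1 *: pZ W.
Proof.
move=> pp [k hk]; exists k, (\poly_(i < size z) numq ((p ^ k)%:R * z`_i)).
have nz : ((p ^ k)%:R : rat) != 0.
  by rewrite pnatr_eq0 expn_eq0 negb_and -lt0n prime_gt0.
apply/polyP => i; rewrite coefZ coef_map /= coef_poly.
case: ltnP => hi; first by rewrite (numqK (hk i)) mulKf.
by rewrite nth_default // mulr0.
Qed.

Lemma map_modp_monic (W D : {poly int}) : D \is monic ->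
  pZ W %% pZ D = pZ (Pdiv.CommonRing.rmodp W D).
Proof.
move=> mD.
have hinj : injective (intr : int -> rat) by exact: intr_inj.
rewrite {1}(Pdiv.RingMonic.rdivp_eq mD W) rmorphD rmorphM /=.
rewrite modpD modp_mull add0r modp_small //.
rewrite !size_map_inj_poly //.
exact: Pdiv.Ring.ltn_rmodpN0 (monic_neq0 mD).
Qed.

Lemma ZP_modp p z (D : {poly int}) : prime p -> D \is monic ->
  ZP p z -> ZP p (z %% pZ D).
Proof.
move=> pp mD /(@ZP_rep p z pp) [k [W ->]].
rewrite modpZl map_modp_monic //.
by apply: ZPV => //; apply: ZP_int.
Qed.

Lemma core_int (p m n : nat) : prime p -> (0 < m)%N -> (0 < n)%N ->
  (logn p m < logn p n)%N ->
  exists A B : {poly int},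
    ((p ^ (logn p n - logn p m))%:R : {poly int}) = A * 'Phi_n + B * 'Phi_m.
Proof.
move=> pp m0 n0 lmn.
set a := logn p m; set b := logn p n.
set v := (n %/ p ^ b)%N; set u := (m %/ p ^ a)%N.
have hn : n = (p ^ b * v)%N by rewrite mulnC divnK // pfactor_dvdnn.
have hm : m = (p ^ a * u)%N by rewrite mulnC divnK // pfactor_dvdnn.
have v0 : (0 < v)%N by move: n0; rewrite hn muln_gt0 => /andP[].
set K := (m * v)%N; set P := (p ^ (b - a))%N.
have K0 : (0 < K)%N by rewrite muln_gt0 m0.
have P0 : (0 < P)%N by rewrite expn_gt0 prime_gt0.
have PK0 : (0 < P * K)%N by rewrite muln_gt0 P0.
have mK : (m %| K)%N by apply: dvdn_mulr.
have nPK : (n %| P * K)%N.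
  have -> : (P * K = n * u)%N.
    rewrite /P /K hm hn !mulnA -expnD subnK ?(ltnW lmn) //.
    by rewrite mulnAC.
  exact: dvdn_mulr.
have nK : ~~ (n %| K)%N.
  apply/negP => /(dvdn_leq_log p K0).
  rewrite /K lognM // -/a.
  have -> : logn p v = 0%N.
    by rewrite /v logn_div ?pfactor_dvdnn // pfactorK // subnn.
  by rewrite addn0 leqNgt lmn.
set Y : {poly int} := 'X^K.
set Q1 := \prod_(d <- divisors K | d != m) 'Phi_d.
have h1 : Y - 1 = 'Phi_m * Q1.
  by rewrite -prod_Cyclotomic // (bigD1_seq m) ?divisors_uniq // -dvdn_divisors.
set Q2 := \prod_(d <- divisors (P * K) | ~~ (d %| K)%N) 'Phi_d.
have h2 : 'X^(P * K) - 1 = (Y - 1) * Q2.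
  rewrite -prod_Cyclotomic // (bigID (fun d => (d %| K)%N)) /=; congr (_ * _).
  rewrite -big_filter -prod_Cyclotomic //; apply: perm_big.
  apply: uniq_perm; rewrite ?filter_uniq ?divisors_uniq // => d.
  rewrite mem_filter -!dvdn_divisors //.
  apply/andP/idP => [[] //|dK]; split => //.
  exact: dvdn_trans dK (dvdn_mull _ _).
set Psi := \sum_(i < P) Y ^+ i.
have h3 : Psi = Q2.
  have YN0 : Y - 1 != 0 by rewrite monic_neq0 // monicXnsubC.
  apply: (mulfI YN0); rewrite -h2 -subrX1 /Y -exprM mulnC.
  by [].
set Q3 := \prod_(d <- [seq d <- divisors (P * K) | ~~ (d %| K)%N] | d != n) 'Phi_d.
have h4 : Q2 = 'Phi_n * Q3.
  rewrite /Q2 -big_filter (bigD1_seq n) ?filter_uniq ?divisors_uniq //.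
  by rewrite mem_filter nK -dvdn_divisors.
set g := \sum_(i < P) \sum_(j < i) Y ^+ j.
have h5 : Psi - P%:R = (Y - 1) * g.
  have -> : (P%:R : {poly int}) = \sum_(i < P) 1 by rewrite sumr_const card_ord.
  rewrite /Psi -sumrB mulr_sumr.
  by apply: eq_bigr => i _; rewrite subrX1.
exists Q3, (- (Q1 * g)).
rewrite mulNr -mulrA [g * _]mulrC mulrA [Q1 * _]mulrC -h1 -h5 [Q3 * _]mulrC -h4 -h3.
by rewrite opprB addrC subrK.
Qed.

Definition coprimeZ p (f g : {poly rat}) :=
  exists U V, [/\ ZP p U, ZP p V & U * f + V * g = 1].

Lemma coprimeZC p f g : coprimeZ p f g -> coprimeZ p g f.
Proof. by move=> [U [V [hU hV e]]]; exists V, U; split => //; rewrite addrC. Qed.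

Lemma coprimeZ1 p f : coprimeZ p f 1.
Proof. by exists 0, 1; split; [exact: ZP0|exact: ZP1|rewrite mul0r add0r mulr1]. Qed.

Lemma coprimeZM p f g h : ZP p g ->
  coprimeZ p f g -> coprimeZ p f h -> coprimeZ p f (g * h).
Proof.
move=> hg [U1 [V1 [hU1 hV1 e1]]] [U2 [V2 [hU2 hV2 e2]]].
exists (U1 + V1 * g * U2), (V1 * V2); split.
- by apply: ZPD => //; apply: ZPM => //; apply: ZPM.
- exact: ZPM.
rewrite mulrDl -addrA -(mulrA (V1 * g) U2 f) (mulrACA V1 V2 g h) -mulrDr e2 mulr1.
exact: e1.
Qed.

Lemma core_rat p m n : prime p -> (0 < m)%N -> (0 < n)%N ->
  logn p m != logn p n -> coprimeZ p (Phi m) (Phi n).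
Proof.
move=> pp m0 n0 hne.
wlog lt : m n m0 n0 hne / (logn p m < logn p n)%N.
  move=> H; case: (ltngtP (logn p m) (logn p n)) => h.
  - exact: H.
  - by apply: coprimeZC; apply: H => //; rewrite eq_sym.
  - by rewrite h eqxx in hne.
have [A [B e]] := @core_int p m n pp m0 n0 lt.
set P := (p ^ (logn p n - logn p m))%N.
have nz : (P%:R : rat) != 0.
  by rewrite pnatr_eq0 expn_eq0 negb_and -lt0n prime_gt0.
exists ((P%:R)^-1 *: pZ B), ((P%:R)^-1 *: pZ A); split.
- by apply: ZPV => //; apply: ZP_int.
- by apply: ZPV => //; apply: ZP_int.
rewrite -!scalerAl -scalerDr /Phi -!rmorphM -rmorphD /= addrC -e.
by rewrite rmorph_nat -scaler_nat scalerA mulVf // scale1r.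
Qed.

Lemma PhiProdE s : PhiProd s = pZ (\prod_(n <- s) 'Phi_n).
Proof. by rewrite rmorph_prod. Qed.

Lemma PhiProd_monic s : (\prod_(n <- s) 'Phi_n) \is monic.
Proof. by apply: monic_prod => n _; apply: Cyclotomic_monic. Qed.

Lemma ZP_PhiProd p s : ZP p (PhiProd s).
Proof. by rewrite PhiProdE; apply: ZP_int. Qed.

Lemma ZP_Phi p n : ZP p (Phi n).
Proof. exact: ZP_int. Qed.

Lemma coprimeZ_seq1 p a y : prime p -> all (fun x => 0 < x)%N a -> (0 < y)%N ->
  (forall x, x \in a -> logn p x != logn p y) ->
  coprimeZ p (Phi y) (PhiProd a).
Proof.
move=> pp ha y0; elim: a ha => [|x a IHa] /=.
  by rewrite /PhiProd big_nil => _ _; apply: coprimeZ1.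
move=> /andP[x0 ha] hxy.
rewrite /PhiProd big_cons; apply: coprimeZM; first exact: ZP_Phi.
+ apply: core_rat => //; rewrite eq_sym; apply: hxy; rewrite inE eqxx //.
+ apply: IHa => // u hu; apply: hxy => //; by rewrite inE hu orbT.
Qed.

Lemma coprimeZ_seq p a b : prime p -> all (fun x => 0 < x)%N a ->
  all (fun x => 0 < x)%N b ->
  (forall x y, x \in a -> y \in b -> logn p x != logn p y) ->
  coprimeZ p (PhiProd a) (PhiProd b).
Proof.
move=> pp ha; elim: b => [|y b IH] /=.
  by rewrite /PhiProd big_nil => _ _; apply: coprimeZ1.
move=> /andP[y0 hb] hxy.
rewrite /PhiProd big_cons; apply: coprimeZM; first exact: ZP_Phi.
- apply: coprimeZC; apply: coprimeZ_seq1 => // x hx; apply: hxy; rewrite ?inE ?eqxx //.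
- apply: IH => // u v hu hv; apply: hxy => //; by rewrite inE hv orbT.
Qed.

Lemma modp_eq_dvd (f a b : {poly rat}) : f %| a - b -> a %% f = b %% f.
Proof. by move=> h; rewrite -[a](subrK b) modpD (modp_eq0 h) add0r. Qed.

Lemma modp_modp_dvd (a d q : {poly rat}) : q %| d -> (a %% d) %% q = a %% q.
Proof.
move=> hq; apply: modp_eq_dvd.
have e : a %% d - a = - (a %/ d * d).
  by rewrite [X in _ - X](divp_eq a d) opprD addrA addrAC addrN add0r.
by rewrite e dvdpNr dvdp_mull.
Qed.

Lemma pjNpE p j n : prime p -> (0 < n)%N -> pjNp p j n = (logn p n == j).
Proof.
move=> pp n0; rewrite /pjNp n0 /=; apply/andP/eqP => [[hd hc] | <-].
- have hn : n = (p ^ j * (n %/ p ^ j))%N by rewrite mulnC divnK.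
  have w0 : (0 < n %/ p ^ j)%N by rewrite divn_gt0 ?expn_gt0 ?prime_gt0 // dvdn_leq.
  have pj0 : (0 < p ^ j)%N by rewrite expn_gt0 prime_gt0.
  rewrite hn lognM // pfactorK // logn_coprime ?addn0 //.
  by rewrite coprime_sym.
- split; first exact: pfactor_dvdnn.
  rewrite coprime_sym prime_coprime //; apply/negP => hdiv.
  set l := logn p n.
  have : (p ^ l.+1 %| n)%N.
    have e : n = (n %/ p ^ l * p ^ l)%N by rewrite divnK // pfactor_dvdnn.
    by rewrite [X in (_ %| X)%N]e expnS mulnC [(_ * p ^ l)%N]mulnC dvdn_mul.
  by rewrite pfactor_dvdn // ltnn.
Qed.

Section Main.
Variable p : nat.
Hypothesis pp : prime p.

Definition sj j (s : seq nat) := [seq n <- s | logn p n == j].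
Definition slt J (s : seq nat) := [seq n <- s | (logn p n < J)%N].

Lemma PhiProd_split (P : pred nat) s :
  PhiProd s = PhiProd (filter P s) * PhiProd (filter (predC P) s).
Proof. by rewrite /PhiProd !big_filter (bigID P). Qed.

Lemma PhiProd_filter_dvd (P : pred nat) s : PhiProd (filter P s) %| PhiProd s.
Proof. by rewrite [X in _ %| X](PhiProd_split P s) dvdp_mulr. Qed.

Lemma slt_S J s : PhiProd (slt J.+1 s) = PhiProd (slt J s) * PhiProd (sj J s).
Proof.
rewrite (PhiProd_split (fun n => logn p n < J)%N (slt J.+1 s)) -!filter_predI.
congr (PhiProd _ * PhiProd _); apply: eq_filter => n /=.
  by rewrite ltnS; apply/andP/idP => [[] //|h]; split => //; apply: ltnW.
by rewrite ltnS -leqNgt eqn_leq andbC.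
Qed.

Lemma sj_dvd_slt j J s : (j < J)%N -> PhiProd (sj j s) %| PhiProd (slt J s).
Proof.
move=> hj.
have -> : sj j s = filter (fun n => logn p n == j) (slt J s).
  rewrite -filter_predI; apply: eq_filter => n /=.
  by apply/idP/andP => [/eqP e|[] //]; split => //; rewrite e.
exact: PhiProd_filter_dvd.
Qed.

Lemma slt_big s J : (forall n, n \in s -> logn p n < J)%N -> slt J s = s.
Proof. by move=> h; apply/all_filterP/allP. Qed.

Lemma sj_nil s j : (forall n, n \in s -> logn p n < j)%N -> sj j s = [::].
Proof.
move=> h; apply/eqP; rewrite -[_ == _]negbK -has_filter; apply/hasPn => n hn.
by rewrite neq_ltn h.
Qed.

Lemma Sseq_sj s j : Sseq Nat_pos s -> Sseq (pjNp p j) (sj j s).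
Proof.
move=> /allP hs; apply/allP => n; rewrite mem_filter => /andP[/eqP e hn].
by rewrite /= pjNpE // ?e //; apply: hs.
Qed.

Lemma Sseq_filter (P : pred nat) s : Sseq Nat_pos s -> Sseq Nat_pos (filter P s).
Proof. by move=> hs; rewrite /Sseq all_filter; apply/allP => n hn; apply/implyP => _; apply: (allP hs). Qed.

Lemma Sseq_pos s : Sseq Nat_pos s -> all (fun x => 0 < x)%N s.
Proof. by []. Qed.

End Main.

Lemma modp_dvd_eq (f a b : {poly rat}) : a %% f = b %% f -> f %| a - b.
Proof. by move=> e; apply/modp_eq0P; rewrite modpD modpN e addrN. Qed.

Lemma coprimeZ_coprimep p f g : coprimeZ p f g -> coprimep f g.
Proof. by move=> [U [V [_ _ e]]]; apply/Bezout_coprimepP; exists (U, V); rewrite /= e eqpxx. Qed.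

Lemma PhiProd_nil : PhiProd [::] = 1.
Proof. by rewrite /PhiProd big_nil. Qed.

Lemma slt0 p s : slt p 0 s = [::].
Proof. by apply/eqP; rewrite -[_ == _]negbK -has_filter; apply/hasPn. Qed.

Lemma bound_exists p s : Sseq Nat_pos s ->
  exists J, forall n, n \in s -> (logn p n < J)%N.
Proof.
move=> hs; exists (\max_(n <- s) n).+1 => n hn.
rewrite ltnS; apply: leq_trans (ltnW (ltn_logl p _)) _.
  exact: (allP hs).
exact: (leq_bigmax_seq (F := id) _ hn).
Qed.

Lemma coprime_slt_sj p J s : prime p -> Sseq Nat_pos s ->
  coprimeZ p (PhiProd (slt p J s)) (PhiProd (sj p J s)).
Proof.
move=> pp hs; apply: coprimeZ_seq => //; try exact: Sseq_filter.
move=> x y; rewrite !mem_filter => /andP[hx _] /andP[/eqP hy _].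
by rewrite hy neq_ltn hx.
Qed.

Lemma uniq_crt p s z1 z2 : prime p -> Sseq Nat_pos s ->
  z1 %% PhiProd s = z1 -> z2 %% PhiProd s = z2 ->
  (forall j, z1 %% PhiProd (sj p j s) = z2 %% PhiProd (sj p j s)) -> z1 = z2.
Proof.
move=> pp hs h1 h2 hj.
have hJ : forall J, PhiProd (slt p J s) %| z1 - z2.
  elim => [|J IH]; first by rewrite slt0 PhiProd_nil dvd1p.
  rewrite slt_S Gauss_dvdp ?IH /=; first exact: modp_dvd_eq.
  by apply: coprimeZ_coprimep; apply: coprime_slt_sj.
have [J hb] := bound_exists p s hs.
have := hJ J; rewrite slt_big // => hd.
apply/eqP; rewrite -subr_eq0; apply/eqP.
by rewrite -h1 -h2 -modpN -modpD; apply/modp_eq0P.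
Qed.

Lemma y_nil p (y : seq nat -> {poly rat}) j : inLim p (pjNp p j) y -> y [::] = 0.
Proof.
move=> [_ h]; rewrite (h [::] [::]) //; first by rewrite PhiProd_nil modp1.
Qed.

Lemma exist_crt p s (y : nat -> seq nat -> {poly rat}) : prime p ->
  (forall j, inLim p (pjNp p j) (y j)) -> Sseq Nat_pos s ->
  exists z, [/\ ZP p z, z %% PhiProd s = z &
    forall j, z %% PhiProd (sj p j s) = y j (sj p j s)].
Proof.
move=> pp hy hs.
have yZ : forall j, ZP p (y j (sj p j s)).
  by move=> j; apply: Zinvp_ZP => //; apply: (hy j).1; apply: Sseq_sj.
have yred : forall j, y j (sj p j s) %% PhiProd (sj p j s) = y j (sj p j s).
  move=> j; symmetry; apply: (hy j).2; rewrite ?dvdpp //; exact: Sseq_sj.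
have hJ : forall J, exists z, ZP p z /\
    forall j, (j < J)%N -> z %% PhiProd (sj p j s) = y j (sj p j s).
  elim => [|J [z [hz hzj]]]; first by exists 0; split => //; exact: ZP0.
  have [U [V [hU hV e]]] := coprime_slt_sj p J s pp hs.
  set F := PhiProd (slt p J s) in e *; set g := PhiProd (sj p J s) in e *.
  set yJ := y J (sj p J s).
  exists (z + (yJ - z) * U * F); split.
    apply: ZPD => //; apply: ZPM; last exact: ZP_PhiProd.
    by apply: ZPM => //; apply: ZPB => //; apply: yZ.
  move=> j; rewrite ltnS leq_eqVlt => /orP[/eqP -> | hjJ].
    rewrite -(yred J) -/g -/yJ; apply: modp_eq_dvd.
    have eVg : V * g = 1 - U * F by rewrite -e addrC addKr.
    have -> : z + (yJ - z) * U * F - yJ = (z - yJ) * (V * g).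
      by rewrite eVg mulrBr mulr1 mulrA -[yJ - z]opprB !mulNr addrAC.
    by rewrite dvdp_mull // dvdp_mull // dvdpp.
  rewrite -(hzj j hjJ); apply: modp_eq_dvd.
  rewrite addrAC subrr add0r dvdp_mull //.
  exact: sj_dvd_slt.
have [J hb] := bound_exists p s hs.
have [z [hz hzj]] := hJ J.
exists (z %% PhiProd s); split.
- by rewrite PhiProdE; apply: ZP_modp => //; exact: PhiProd_monic.
- exact: modp_id.
move=> j; case: (ltnP j J) => hjJ.
  by rewrite modp_modp_dvd ?hzj //; apply: PhiProd_filter_dvd.
rewrite sj_nil; last by move=> n /hb h; apply: leq_trans h hjJ.
by rewrite PhiProd_nil modp1 (@y_nil p (y j) j (hy j)).
Qed.

Lemma pjNp_pos p j s : Sseq (pjNp p j) s -> Sseq Nat_pos s.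
Proof. by move=> /allP h; apply/allP => n /h /and3P[]. Qed.

Theorem proposition8 (p : nat) (hp : prime p)
    (y : nat -> seq nat -> {poly rat})
    (hy : forall j : nat, inLim p (pjNp p j) (y j)) :
  exists x : seq nat -> {poly rat},
    [/\ inLim p Nat_pos x,
        (forall (j : nat) (s : seq nat), Sseq (pjNp p j) s -> x s = y j s)
      & (forall x' : seq nat -> {poly rat}, inLim p Nat_pos x' ->
           (forall (j : nat) (s : seq nat), Sseq (pjNp p j) s -> x' s = y j s) ->
           forall s : seq nat, Sseq Nat_pos s -> x' s = x s)].
Proof.
have hex : forall s, exists z, Sseq Nat_pos s ->
    [/\ ZP p z, z %% PhiProd s = z &
        forall j, z %% PhiProd (sj p j s) = y j (sj p j s)].
  move=> s; case: (boolP (Sseq Nat_pos s)) => hs.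
    by have [z hz] := @exist_crt p s y hp hy hs; exists z.
  by exists 0.
pose x s := proj1_sig (constructive_indefinite_description _ (hex s)).
have hx : forall s, Sseq Nat_pos s ->
    [/\ ZP p (x s), x s %% PhiProd s = x s &
        forall j, x s %% PhiProd (sj p j s) = y j (sj p j s)].
  by move=> s; exact: (proj2_sig (constructive_indefinite_description _ (hex s))).
exists x; split.
- split.
    by move=> s hs; have [h _ _] := hx s hs; exact: ZP_Zinvp.
  move=> s t hs ht hst.
  have [_ rs js] := hx s hs; have [_ rt jt] := hx t ht.
  apply: (@uniq_crt p s _ _ hp hs) => //; first exact: modp_id.
  move=> j; rewrite js modp_modp_dvd; last exact: PhiProd_filter_dvd.
  have dj : PhiProd (sj p j s) %| PhiProd (sj p j t).
    have h1 : PhiProd (sj p j s) %| PhiProd t.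
      exact: dvdp_trans (PhiProd_filter_dvd _ s) hst.
    rewrite (PhiProd_split (fun n => logn p n == j) t) Gauss_dvdpl in h1 => //.
    apply: (@coprimeZ_coprimep p); apply: (@coprimeZ_seq p) => //; try exact: Sseq_filter.
    move=> u v; rewrite !mem_filter => /andP[/eqP -> _] /andP[hv _].
    by rewrite eq_sym.
  rewrite -(@modp_modp_dvd (x t) _ _ dj) jt.
  apply: (hy j).2 => //; exact: Sseq_sj.
- move=> j s hs.
  have hs' := @pjNp_pos p j s hs.
  have [_ rs js] := hx s hs'.
  have hall : forall n, n \in s -> logn p n == j.
    move=> n hn; have := allP hs n hn.
    by rewrite /= pjNpE //; apply: (allP hs' n hn).
  apply: (@uniq_crt p s _ _ hp hs') => //.
    by symmetry; apply: (hy j).2 => //; rewrite dvdpp.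
  move=> i; rewrite js; case: (eqVneq i j) => [-> | hij].
    have -> : sj p j s = s by apply/all_filterP/allP.
    by apply: (hy j).2 => //; rewrite dvdpp.
  have -> : sj p i s = [::].
    apply/eqP; rewrite -[_ == _]negbK -has_filter; apply/hasPn => n hn.
    by rewrite (eqP (hall n hn)) eq_sym.
  by rewrite PhiProd_nil modp1 (@y_nil p (y i) i (hy i)).
- move=> x' [hZ hc] hag s hs.
  have [_ rs js] := hx s hs.
  apply: (@uniq_crt p s _ _ hp hs) => //.
    by symmetry; apply: hc => //; rewrite dvdpp.
  move=> j; rewrite js -(hag j _ (@Sseq_sj p hp s j hs)).
  by symmetry; apply: hc => //; [exact: Sseq_filter | exact: PhiProd_filter_dvd].
Qed.
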